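(* Let $X$ and $Y$ be finite topological spaces and give $X\times Y$ the product topology. Then for all $(a,b),(c,d)\in X\times Y$, $$\Psi_{X\times Y}((a,b),(c,d))=\Psi_X(a,c)\,|U_{[d]}|+\Psi_Y(b,d)\,|U_{[c]}|-\Psi_X(a,c)\,\Psi_Y(b,d),$$ where $U_{[c]}$ is the minimal open set of $[c]$ in the quotient space $X/{\sim}$ and $U_{[d]}$ is the minimal open set of $[d]$ in $Y/{\sim}$.
   Context: For a finite topological space $X$ and $x\in X$, $U_x$ denotes the minimal open set containing $x$ (the intersection of all open sets containing $x$). A nested sequence of open sets around $x$ is a finite sequence $U_0\subsetneq U_1\subsetneq\cdots\subsetneq U_m=X$ of open sets with $U_0=U_x$ such that for each $j$ there is no open set $V$ with $U_j\subsetneq V\subsetneq U_{j+1}$. The furtherness function $\Psi_X:X\times X\to\{0,1,\dots,|X|-1\}$ is defined by: $\Psi_X(x,y)$ is the smallest integer $k\ge 0$ such that there exists a nested sequence $(U_j)_{j\ge0}$ of open sets around $x$ with $y\in U_k$. For a finite space $X$, $\sim$ is the equivalence relation $x\sim y$ iff $\Psi_X(x,y)=\Psi_X(y,x)=0$ (equivalently $U_x=U_y$), and $X/{\sim}$ carries the quotient topology; in it $U_{[c]}=\{[y]\mid y\in U_c\}$, so $|U_{[c]}|$ is the number of $\sim$-classes meeting $U_c$. *)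

(* Defs.v *)
From mathcomp Require Import all_boot all_order all_algebra.
From Stdlib Require Import ClassicalEpsilon.
Set Implicit Arguments. Unset Strict Implicit. Unset Printing Implicit Defensive.

Definition is_topology (T : finType) (O : {set {set T}}) : Prop :=
  [/\ set0 \in O, [set: T] \in O,
      (forall U V, U \in O -> V \in O -> U :|: V \in O) &
      (forall U V, U \in O -> V \in O -> U :&: V \in O)].

Definition prod_top (X Y : finType) (OX : {set {set X}}) (OY : {set {set Y}})
  : {set {set (X * Y)}} :=
  [set W : {set X * Y} | [forall p in W, exists U in OX, exists V in OY,
     [&& p.1 \in U, p.2 \in V & setX U V \subset W]]].

Definition Umin (T : finType) (O : {set {set T}}) (x : T) : {set T} :=
  \bigcap_(U in O | x \in U) U.

Definition nested (T : finType) (O : {set {set T}}) (x : T) (s : seq {set T}) : Prop :=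
  [/\ 0 < size s,
      nth set0 s 0 = Umin O x,
      last set0 s = [set: T],
      all (fun U => U \in O) s &
      forall j, j.+1 < size s ->
        nth set0 s j \proper nth set0 s j.+1 /\
        ~ (exists V, [/\ V \in O, nth set0 s j \proper V & V \proper nth set0 s j.+1])].

Definition asb (P : Prop) : bool := if excluded_middle_informative P then true else false.

Definition psi_pred (T : finType) (O : {set {set T}}) (x y : T) : pred nat :=
  fun k => asb (exists s, nested O x s /\ k < size s /\ y \in nth set0 s k).

(* Furtherness function: the smallest such k (0 if none exists, which never
   happens for a finite topological space). *)
Definition Psi (T : finType) (O : {set {set T}}) (x y : T) : nat :=
  match excluded_middle_informative (exists k, psi_pred O x y k) with
  | left h => ex_minn h
  | right _ => 0
  end.

Definition sim (T : finType) (O : {set {set T}}) (x y : T) : bool :=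
  (Psi O x y == 0) && (Psi O y x == 0).

(* |U_[c]| in X/~ : the number of ~-classes meeting U_c. *)
Definition card_Uq (T : finType) (O : {set {set T}}) (c : T) : nat :=
  #|[set [set z | sim O y z] | y in Umin O c]|.

(* Main.v *)
Require Import Defs.
From mathcomp Require Import all_boot all_order all_algebra.
From mathcomp Require Import zify.
From Stdlib Require Import ClassicalEpsilon.
Set Implicit Arguments. Unset Strict Implicit. Unset Printing Implicit Defensive.

Definition rk (T : finType) (O : {set {set T}}) (W : {set T}) :=
  #|[set Umin O y | y in W]|.

Definition cov (T : finType) (O : {set {set T}}) (U V : {set T}) : Prop :=
  U \proper V /\ ~ (exists W, [/\ W \in O, U \proper W & W \proper V]).

Lemma asbP (P : Prop) : reflect P (asb P).
Proof. rewrite /asb; case: excluded_middle_informative => h; by constructor. Qed.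

Lemma Umin_in (T : finType) (O : {set {set T}}) x : x \in Umin O x.
Proof. by apply/bigcapP => U /andP[_]. Qed.

Lemma Umin_sub (T : finType) (O : {set {set T}}) x U :
  U \in O -> x \in U -> Umin O x \subset U.
Proof. by move=> UO xU; apply: bigcap_inf; rewrite UO xU. Qed.

Lemma Umin_open (T : finType) (O : {set {set T}}) x :
  is_topology O -> Umin O x \in O.
Proof.
case=> _ OT _ OI; rewrite /Umin.
by elim/big_rec: _ => // U W /andP[UO _] WO; apply: OI.
Qed.

Lemma Umin_mono (T : finType) (O : {set {set T}}) x y :
  is_topology O -> y \in Umin O x -> Umin O y \subset Umin O x.
Proof. by move=> tO; apply: Umin_sub; apply: Umin_open. Qed.

Lemma rk_mono (T : finType) (O : {set {set T}}) (A B : {set T}) :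
  A \subset B -> rk O A <= rk O B.
Proof. by move=> AB; apply: subset_leq_card; apply: imsetS. Qed.

Lemma pick_lemma (T : finType) (O : {set {set T}}) (A B : {set T}) :
  is_topology O -> B \in O -> A \proper B ->
  exists y, [/\ y \in B, y \notin A &
    forall z, z \in Umin O y -> z \notin A -> Umin O z = Umin O y].
Proof.
move=> tO BO /properP[AB [y0 y0B y0A]].
have y0D : y0 \in B :\: A by rewrite inE y0A y0B.
case: (arg_minnP (fun y => #|Umin O y|) y0D) => y yD ymin; move: yD.
move=> yD; have : y \in B :\: A by []. rewrite !inE => /andP[yA yB].
exists y; split => // z zy zA.
have zB : z \in B by apply: (subsetP (Umin_sub BO yB)).
apply/eqP; rewrite eqEcard (Umin_mono tO zy) /=.
have zD : z \in B :\: A by rewrite inE zA zB.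
exact: ymin.
Qed.

Lemma notin_img (T : finType) (O : {set {set T}}) (U : {set T}) y :
  U \in O -> y \notin U -> Umin O y \notin [set Umin O u | u in U].
Proof.
move=> UO yU; apply/imsetP => [[u uU E]].
by move: yU; rewrite (subsetP (Umin_sub UO uU)) // -E Umin_in.
Qed.

Lemma img_add (T : finType) (O : {set {set T}}) (U : {set T}) y :
  is_topology O -> 
  (forall z, z \in Umin O y -> z \notin U -> Umin O z = Umin O y) ->
  [set Umin O z | z in U :|: Umin O y] = Umin O y |: [set Umin O u | u in U].
Proof.
move=> tO H; apply/setP => S; apply/imsetP/setU1P.
- case=> z; rewrite inE => /orP[zU|zy] ->.
  + by right; apply: imset_f.
  + case: (boolP (z \in U)) => zU; first by right; apply: imset_f.
    by left; apply: H.
- case=> [->|/imsetP[u uU ->]].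
  + by exists y; rewrite // inE Umin_in orbT.
  + by exists u; rewrite // inE uU.
Qed.

Lemma step (T : finType) (O : {set {set T}}) (U V : {set T}) :
  is_topology O -> U \in O -> V \in O -> cov O U V -> rk O V = (rk O U).+1.
Proof.
move=> tO UO VO [UV ncov].
have [y [yV yU H]] := pick_lemma tO VO UV.
have tO' := tO; case: tO' => _ _ OU _.
have WO : U :|: Umin O y \in O by apply: OU => //; apply: Umin_open.
have UW : U \proper U :|: Umin O y.
  by apply/properP; split; [apply: subsetUl | exists y; rewrite // inE Umin_in orbT].
have WV : U :|: Umin O y \subset V.
  by rewrite subUset (proper_sub UV) (Umin_sub VO yV).
have EW : U :|: Umin O y = V.
  apply/eqP; apply: contraT => ne; exfalso; apply: ncov.
  by exists (U :|: Umin O y); split => //; rewrite properEneq ne WV.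
by rewrite /rk -EW img_add // cardsU1 notin_img.
Qed.

Lemma exists_cov (T : finType) (O : {set {set T}}) (A B : {set T}) :
  is_topology O -> A \in O -> B \in O -> A \proper B ->
  exists A', [/\ A' \in O, cov O A A' & A' \subset B].
Proof.
move=> tO AO BO AB.
have [y [yB yA H]] := pick_lemma tO BO AB.
have tO' := tO; case: tO' => _ _ OU _.
have WO : A :|: Umin O y \in O by apply: OU => //; apply: Umin_open.
exists (A :|: Umin O y); split => //; last first.
  by rewrite subUset (proper_sub AB) (Umin_sub BO yB).
split.
  by apply/properP; split; [apply: subsetUl | exists y; rewrite // inE Umin_in orbT].
case=> W [WOp /properP[AW [z zW zA]] WA'].
have zy : z \in Umin O y.
  by move: (subsetP (proper_sub WA') z zW); rewrite inE (negbTE zA).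
have yW : y \in W by rewrite (subsetP (Umin_sub WOp zW)) // (H z zy zA) Umin_in.
have : A :|: Umin O y \subset W by rewrite subUset AW (Umin_sub WOp yW).
by move=> sub; move: WA'; rewrite properE sub andbF.
Qed.

Lemma chain (T : finType) (O : {set {set T}}) : is_topology O ->
  forall n (A B C : {set T}), rk O C - rk O A = n ->
  A \in O -> B \in O -> C \in O -> A \subset B -> B \subset C ->
  exists s, [/\ size s = n.+1, nth set0 s 0 = A, last set0 s = C,
    all (fun U => U \in O) s
    & (forall j, j.+1 < size s -> cov O (nth set0 s j) (nth set0 s j.+1))] /\
    nth set0 s (rk O B - rk O A) = B.
Proof.
move=> tO; elim=> [|n IH] A B C Hn AO BO CO AB BC.
- have AC : A = C.
    apply/eqP; apply: contraT => ne.
    have AC' : A \proper C by rewrite properEneq ne (subset_trans AB BC).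
    have [A' [A'O cA' A'C]] := exists_cov tO AO CO AC'.
    have := step tO AO A'O cA'; have := rk_mono O A'C; lia.
  subst C.
  have BA : B = A by apply/eqP; rewrite eqEsubset BC AB.
  subst B; exists [:: A]; split; last by rewrite subnn.
  by split => //=; rewrite AO.
- have ne : A != C by apply/eqP => eAC; move: Hn; rewrite eAC subnn.
  have AC' : A \proper C by rewrite properEneq ne (subset_trans AB BC).
  case: (eqVneq A B) => [AeB|AnB].
  + subst B.
    have [A' [A'O cA' A'C]] := exists_cov tO AO CO AC'.
    have rA' := step tO AO A'O cA'.
    have [s [[sz s0 sl sa sc] _]] := IH A' A' C ltac:(lia) A'O A'O CO (subxx _) A'C.
    exists (A :: s); split; first split => //=.
    * by rewrite sz.
    * by case: s sz sl {s0 sa sc} => [|y s'].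
    * by rewrite AO sa.
    * case=> [|j] /= Hj; first by rewrite s0.
      by apply: sc.
    * by rewrite subnn.
  + have AB' : A \proper B by rewrite properEneq AnB AB.
    have [A' [A'O cA' A'B]] := exists_cov tO AO BO AB'.
    have rA' := step tO AO A'O cA'.
    have := rk_mono O A'B => le1.
    have [s [[sz s0 sl sa sc] sB]] :=
      IH A' B C ltac:(lia) A'O BO CO A'B BC.
    exists (A :: s); split; first split => //=.
    * by rewrite sz.
    * by case: s sz sl {s0 sa sc sB} => [|y s'].
    * by rewrite AO sa.
    * case=> [|j] /= Hj; first by rewrite s0.
      by apply: sc.
    * have -> : rk O B - rk O A = (rk O B - rk O A').+1 by lia.
      by [].
Qed.

Lemma nested_rk (T : finType) (O : {set {set T}}) x s : is_topology O ->
  nested O x s -> forall k, k < size s ->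
  rk O (nth set0 s k) = rk O (Umin O x) + k /\ Umin O x \subset nth set0 s k.
Proof.
move=> tO [sz s0 sl sa sc]; elim=> [|k IH] Hk.
  by rewrite s0 addn0.
have [IH1 IH2] := IH (ltnW Hk).
have [pr nb] := sc k Hk.
have Ok : nth set0 s k \in O by apply: (allP sa); apply: mem_nth; apply: ltnW.
have Ok1 : nth set0 s k.+1 \in O by apply: (allP sa); apply: mem_nth.
rewrite (step tO Ok Ok1 (conj pr nb)) IH1 addnS; split => //.
exact: subset_trans IH2 (proper_sub pr).
Qed.

Lemma Psi_eq (T : finType) (O : {set {set T}}) x y : is_topology O ->
  Psi O x y = rk O (Umin O x :|: Umin O y) - rk O (Umin O x).
Proof.
move=> tO.
set n := rk O (Umin O x :|: Umin O y) - rk O (Umin O x).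
have tO' := tO; case: tO' => _ OT OU _.
have Pn : psi_pred O x y n.
  apply/asbP.
  have UxO := Umin_open x tO; have UyO := Umin_open y tO.
  have BO : Umin O x :|: Umin O y \in O by apply: OU.
  have [s [[sz s0 sl sa sc] sB]] := chain tO (erefl _) UxO BO OT
     (subsetUl _ _) (subsetT _).
  exists s; split; first by split => //; rewrite sz.
  split; first by rewrite sz ltnS; have := rk_mono O (subsetT (Umin O x :|: Umin O y)); lia.
  by rewrite sB inE Umin_in orbT.
have low : forall k, psi_pred O x y k -> n <= k.
  move=> k /asbP [s [ns [ks ys]]].
  have [r1 r2] := nested_rk tO ns ks.
  have ns' := ns; case: ns' => _ _ _ sa _.
  have Ok : nth set0 s k \in O by apply: (allP sa); apply: mem_nth.
  have := rk_mono O (_ : Umin O x :|: Umin O y \subset nth set0 s k).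
  rewrite r1 subUset r2 (Umin_sub Ok ys) => /(_ isT); lia.
rewrite /Psi; case: excluded_middle_informative => [h|nh]; last first.
  by exfalso; apply: nh; exists n.
case: ex_minnP => m Pm mmin.
by apply/eqP; rewrite eqn_leq mmin // low.
Qed.

Lemma img_I (T : finType) (O : {set {set T}}) (A B : {set T}) : is_topology O ->
  A \in O -> B \in O ->
  [set Umin O z | z in A :&: B] = [set Umin O z | z in A] :&: [set Umin O z | z in B].
Proof.
move=> tO AO BO; apply/setP => S; apply/imsetP/setIP.
- case=> z; rewrite inE => /andP[zA zB] ->; split; exact: imset_f.
- case=> /imsetP[u uA ->] /imsetP[v vB E].
  exists u => //; rewrite inE uA /=.
  by apply: (subsetP (Umin_sub BO vB)); rewrite -E Umin_in.
Qed.

Lemma rk_UI (T : finType) (O : {set {set T}}) (A B : {set T}) : is_topology O ->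
  A \in O -> B \in O -> rk O (A :|: B) + rk O (A :&: B) = rk O A + rk O B.
Proof. by move=> tO AO BO; rewrite /rk imsetU img_I // cardsUI. Qed.

Lemma Psi_rk (T : finType) (O : {set {set T}}) x y : is_topology O ->
  Psi O x y + rk O (Umin O x :&: Umin O y) = rk O (Umin O y).
Proof.
move=> tO; rewrite Psi_eq //.
have := rk_UI tO (Umin_open x tO) (Umin_open y tO).
have := rk_mono O (subsetUl (Umin O x) (Umin O y)); lia.
Qed.

Lemma Psi0 (T : finType) (O : {set {set T}}) y z : is_topology O ->
  (Psi O y z == 0) = (z \in Umin O y).
Proof.
move=> tO; have E := Psi_rk y z tO.
apply/idP/idP.
- move=> /eqP E1; rewrite E1 add0n in E.
  have : [set Umin O u | u in Umin O y :&: Umin O z] == [set Umin O u | u in Umin O z].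
    by rewrite eqEcard (imsetS _ (subsetIr _ _)) /=; move: E; rewrite /rk => ->.
  move=> /eqP E2; have : Umin O z \in [set Umin O u | u in Umin O y :&: Umin O z].
    by rewrite E2 imset_f // Umin_in.
  case/imsetP=> u; rewrite inE => /andP[uy _] Ez.
  by apply: (subsetP (Umin_mono tO uy)); rewrite -Ez Umin_in.
- move=> zy; rewrite (setIidPr (Umin_mono tO zy)) in E; apply/eqP; lia.
Qed.

Lemma sim_eq (T : finType) (O : {set {set T}}) y z : is_topology O ->
  sim O y z = (Umin O y == Umin O z).
Proof.
move=> tO; rewrite /sim !Psi0 //; apply/andP/eqP.
- case=> zy yz; apply/eqP; rewrite eqEsubset.
  by rewrite (Umin_mono tO yz) (Umin_mono tO zy).
- by move=> E; rewrite E Umin_in -E Umin_in.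
Qed.

Lemma card_Uq_rk (T : finType) (O : {set {set T}}) c : is_topology O ->
  card_Uq O c = rk O (Umin O c).
Proof.
move=> tO; rewrite /card_Uq /rk.
pose f := fun S : {set T} => [set z | Umin O z == S].
have -> : [set [set z | sim O y z] | y in Umin O c] = [set (f \o Umin O) y | y in Umin O c].
  apply: eq_imset => y; apply/setP => z; rewrite !inE sim_eq // eq_sym.
rewrite (imset_comp f (Umin O)) card_in_imset // => S1 S2 /imsetP[u _ ->] /imsetP[v _ ->] E.
have : u \in f (Umin O u) by rewrite inE.
by rewrite E inE => /eqP.
Qed.

Lemma prod_topo (X Y : finType) (OX : {set {set X}}) (OY : {set {set Y}}) :
  is_topology OX -> is_topology OY -> is_topology (prod_top OX OY).
Proof.
case=> X0 XT XU XI; case=> Y0 YT YU YI; split.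
- by rewrite inE; apply/forall_inP => p; rewrite inE.
- rewrite inE; apply/forall_inP => p _.
  apply/exists_inP; exists setT => //; apply/exists_inP; exists setT => //.
  by rewrite !inE subsetT.
- move=> U V; rewrite !inE => /forall_inP HU /forall_inP HV.
  apply/forall_inP => p; rewrite inE => /orP[pU|pV].
  + have /exists_inP[A AO /exists_inP[B BO /and3P[pA pB sAB]]] := HU p pU.
    apply/exists_inP; exists A => //; apply/exists_inP; exists B => //.
    by rewrite pA pB (subset_trans sAB (subsetUl _ _)).
  + have /exists_inP[A AO /exists_inP[B BO /and3P[pA pB sAB]]] := HV p pV.
    apply/exists_inP; exists A => //; apply/exists_inP; exists B => //.
    by rewrite pA pB (subset_trans sAB (subsetUr _ _)).
- move=> U V; rewrite !inE => /forall_inP HU /forall_inP HV.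
  apply/forall_inP => p; rewrite inE => /andP[pU pV].
  have /exists_inP[A AO /exists_inP[B BO /and3P[pA pB sAB]]] := HU p pU.
  have /exists_inP[A' AO' /exists_inP[B' BO' /and3P[pA' pB' sAB']]] := HV p pV.
  apply/exists_inP; exists (A :&: A'); first exact: XI.
  apply/exists_inP; exists (B :&: B'); first exact: YI.
  rewrite !inE pA pB pA' pB' /=; apply/subsetP => q; rewrite !inE.
  case/andP=> /andP[q1 q1'] /andP[q2 q2'].
  by rewrite (subsetP sAB) ?(subsetP sAB') // inE ?q1 ?q2 ?q1' ?q2'.
Qed.

Lemma Umin_prod (X Y : finType) (OX : {set {set X}}) (OY : {set {set Y}}) a b :
  is_topology OX -> is_topology OY ->
  Umin (prod_top OX OY) (a, b) = setX (Umin OX a) (Umin OY b).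
Proof.
move=> tX tY; apply/eqP; rewrite eqEsubset; apply/andP; split.
- apply: Umin_sub; last by rewrite inE /= !Umin_in.
  rewrite inE; apply/forall_inP => p pW.
  apply/exists_inP; exists (Umin OX a); first exact: Umin_open.
  apply/exists_inP; exists (Umin OY b); first exact: Umin_open.
  by move: pW; rewrite inE => /andP[-> ->] /=.
- apply/subsetP => p pX; apply/bigcapP => W /andP[WO abW].
  move: WO; rewrite inE => /forall_inP /(_ _ abW).
  case/exists_inP=> A AO /exists_inP[B BO /and3P[aA bB sAB]].
  apply: (subsetP sAB); move: pX; rewrite !inE => /andP[p1 p2].
  by rewrite (subsetP (Umin_sub AO aA)) ?(subsetP (Umin_sub BO bB)).
Qed.

Lemma rk_prod (X Y : finType) (OX : {set {set X}}) (OY : {set {set Y}})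
  (A : {set X}) (B : {set Y}) :
  is_topology OX -> is_topology OY ->
  rk (prod_top OX OY) (setX A B) = rk OX A * rk OY B.
Proof.
move=> tX tY; rewrite /rk -cardsX.
have -> : [set Umin (prod_top OX OY) y | y in setX A B] =
  [set setX p.1 p.2 | p in setX [set Umin OX y | y in A] [set Umin OY y | y in B]].
  apply/setP => S; apply/imsetP/imsetP.
  - case=> [[x y]]; rewrite inE /= => /andP[xA yB] ->.
    exists (Umin OX x, Umin OY y); last by rewrite Umin_prod.
    by rewrite inE /= !imset_f.
  - case=> [[P Q]]; rewrite inE /= => /andP[/imsetP[x xA ->] /imsetP[y yB ->]] ->.
    by exists (x, y); rewrite ?inE ?xA ?yB // Umin_prod.
apply: card_in_imset => [[P Q] [P' Q']]; rewrite !inE /=.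
case/andP=> /imsetP[x _ ->] /imsetP[y _ ->].
case/andP=> /imsetP[x' _ ->] /imsetP[y' _ ->] E.
have H1 : forall u v, (u \in Umin OX x) && (v \in Umin OY y) =
                      (u \in Umin OX x') && (v \in Umin OY y').
  by move=> u v; move/setP: E => /(_ (u, v)); rewrite !inE.
have /andP[xx' yy'] : (x \in Umin OX x') && (y \in Umin OY y') by rewrite -H1 !Umin_in.
have /andP[x'x y'y] : (x' \in Umin OX x) && (y' \in Umin OY y) by rewrite H1 !Umin_in.
congr pair; apply/setP => u.
- by have := H1 u y; rewrite Umin_in yy' !andbT.
- by have := H1 x u; rewrite Umin_in xx'.
Qed.

Import GRing.Theory Num.Theory.
Local Open Scope ring_scope.

Theorem theorem4p1 (X Y : finType) (OX : {set {set X}}) (OY : {set {set Y}}) :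
  is_topology OX -> is_topology OY ->
  forall (a c : X) (b d : Y),
    ((Psi (prod_top OX OY) (a, b) (c, d))%:Z : int) =
      (Psi OX a c)%:Z * (card_Uq OY d)%:Z + (Psi OY b d)%:Z * (card_Uq OX c)%:Z
      - (Psi OX a c)%:Z * (Psi OY b d)%:Z.
Proof.
move=> tX tY a c b d.
have tP := prod_topo tX tY.
have HP := Psi_rk (a, b) (c, d) tP.
rewrite !Umin_prod // in HP.
have EI : setX (Umin OX a) (Umin OY b) :&: setX (Umin OX c) (Umin OY d) =
          setX (Umin OX a :&: Umin OX c) (Umin OY b :&: Umin OY d).
  by apply/setP => -[u v]; rewrite !inE /= -!andbA; do !bool_congr.
rewrite EI !rk_prod // in HP.
have HX := Psi_rk a c tX; have HY := Psi_rk b d tY.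
rewrite !card_Uq_rk //.
move: HP HX HY.
set P := Psi _ _ _; set p := Psi OX a c; set q := Psi OY b d.
set i1 := rk OX _; set i2 := rk OY _; set rc := rk OX _; set rd := rk OY _.
move=> HP HX HY.
have E : P = (p * q + p * i2 + i1 * q)%N.
  rewrite -HX -HY in HP; nia.
rewrite E -HX -HY; lia.
Qed.
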